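(* Let $\epsilon>0$ and let $a_1,\dots,a_N\in(0,1)$ satisfy $\sum_{i=1}^Na_i=1$ and $a_{N-1}+a_N\ge\epsilon$. Then \[\sum_{j=1}^N\frac{a_j}{\sum_{i\ge j}a_i}\le\lceil\log_2(1/\epsilon)\rceil+2.\] *)

(* Defs.v *)
From HB Require Import structures.
From mathcomp Require Import all_boot all_order all_algebra.
From mathcomp Require Import all_classical all_reals all_analysis.
Import Order.TTheory GRing.Theory Num.Theory.
Local Open Scope ring_scope.

Definition log2 {R : realType} (x : R) : R := ln x / ln 2.

(* Main.v *)
Require Import Defs.
From HB Require Import structures.
From mathcomp Require Import all_boot all_order all_algebra.
From mathcomp Require Import all_classical all_reals all_analysis.
From mathcomp Require Import lra.
Import Order.TTheory GRing.Theory Num.Theory.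
Local Open Scope ring_scope.

Lemma key_ln (R : realType) (S S' : R) : 0 < S' -> S' <= S ->
  (S - S') / S <= ln S - ln S'.
Proof.
move=> S'0 S'S.
have S0 : 0 < S by apply: lt_le_trans S'S.
have q0 : 0 < S' / S by rewrite divr_gt0.
have h := @le_ln1Dx R (S' / S - 1).
have e : 1 + (S' / S - 1) = S' / S by rewrite addrC subrK.
rewrite e in h.
have := h ltac:(lra).
rewrite ln_div ?posrE // => h2.
have -> : (S - S') / S = 1 - S' / S by rewrite mulrBl divff ?gt_eqF.
lra.
Qed.

Lemma ln2_bounds (R : realType) : 0 < ln (2 : R) < 1.
Proof.
apply/andP; split; first by apply: ln_gt0; lra.
have h : (2 : R) < expR 1.
  have := @expR_gt1Dx R 1 (oner_neq0 R). by rewrite [1 + 1]/2.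
rewrite -(ltr_ln (R:=R)) ?posrE ?expR_gt0 // ?expRK // in h; lra.
Qed.

Theorem lemma6p11 (R : realType) (eps : R) (N : nat) (a : nat -> R)
  (heps : 0 < eps)
  (ha : forall i : nat, (1 <= i <= N)%N -> 0 < a i < 1)
  (hsum : \sum_(1 <= i < N.+1) a i = 1)
  (hlast : eps <= a N.-1 + a N) :
  \sum_(1 <= j < N.+1) a j / (\sum_(j <= i < N.+1) a i)
    <= (Num.ceil (log2 (1 / eps)))%:~R + 2.
Proof.
set S := fun j => \sum_(j <= i < N.+1) a i.
have Spos : forall j, (1 <= j <= N)%N -> 0 < S j.
  move=> j /andP[j1 jN]; rewrite /S big_ltn ?ltnS //.
  have := ha j; rewrite j1 jN => /(_ isT) /andP[aj _].
  suff : 0 <= \sum_(j.+1 <= i < N.+1) a i by lra.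
  rewrite big_nat_cond; apply: sumr_ge0 => i /andP[/andP[ji iN] _].
  have := ha i; rewrite (leq_trans j1 (ltnW ji)) -ltnS iN => /(_ isT) /andP[ai _].
  exact: ltW.
have Srec : forall j, (j <= N)%N -> S j = a j + S j.+1.
  by move=> j jN; rewrite /S big_ltn ?ltnS.
have S1 : S 1%N = 1 by [].
have ajle : forall j, (1 <= j < N)%N -> a j / S j <= ln (S j) - ln (S j.+1).
  move=> j /andP[j1 jN].
  have -> : a j = S j - S j.+1 by rewrite (Srec j (ltnW jN)) addrK.
  apply: key_ln; first by apply: Spos; apply/andP; split.
  rewrite (Srec j (ltnW jN)) lerDr.
  by have := ha j; rewrite j1 (ltnW jN) => /(_ isT) /andP[/ltW].
have tele : forall k, (k.+1 < N)%N ->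
    \sum_(1 <= j < k.+1) a j / S j <= - ln (S k.+1).
  elim=> [|k IH] kN.
    by rewrite big_geq // S1 ln1 oppr0.
  rewrite big_nat_recr //=.
  have := IH (ltnW kN); have := ajle k.+1; move=> /(_ ltac:(by rewrite /= ltnW)).
  lra.
case: N ha hsum hlast @S Spos Srec S1 ajle tele => [|[|n]] ha hsum hlast S Spos Srec S1 ajle tele.
- by move: hsum; rewrite big_geq // => /eqP; rewrite eq_sym oner_eq0.
- by move: hsum; rewrite big_nat1 => h; have := ha 1%N isT; rewrite h ltxx andbF.
rewrite /= in hlast.
rewrite -/(S _).
under eq_bigr do rewrite -/(S _).
rewrite big_nat_recr //= big_nat_recr //=.
have h1 := tele n (ltnSn _).
have Sn2 : S n.+2 = a n.+2 by rewrite /S big_nat1.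
have an2 : 0 < a n.+2 by have /andP[] := ha n.+2 (leqnn _).
have an1 : 0 < a n.+1 by have /andP[] := ha n.+1 (leqW (leqnn _)).
have Sn1 : S n.+1 = a n.+1 + a n.+2 by rewrite Srec // Sn2.
have t2 : a n.+2 / S n.+2 = 1 by rewrite Sn2 divff ?gt_eqF.
have t1 : a n.+1 / S n.+1 <= 1.
  rewrite Sn1 ler_pdivrMr; last by rewrite addr_gt0.
  by rewrite mul1r lerDl ltW.
have Sle1 : S n.+1 <= 1.
  have split : S 1%N = \sum_(1 <= i < n.+1) a i + S n.+1.
    rewrite /S -big_cat_nat //; exact: leq_trans (leqnSn _) (leqnSn _).
  suff : 0 <= \sum_(1 <= i < n.+1) a i by lra.
  rewrite big_nat_cond; apply: sumr_ge0 => i /andP[/andP[i1 iN] _].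
  have : (0 < i <= n.+2)%N by rewrite i1 /= ltnW // ltnW.
  by move/ha => /andP[/ltW].
have e1 : eps <= 1 by lra.
have hl : - ln (S n.+1) <= ln (1 / eps).
  rewrite div1r lnV ?posrE // lerN2 ler_ln ?posrE //; lra.
have X0 : 0 <= ln (1 / eps) by apply: ln_ge0; rewrite div1r invf_ge1.
have hX : ln (1 / eps) <= log2 (1 / eps).
  rewrite /log2; have /andP[l0 l1] := ln2_bounds R.
  by rewrite ler_pdivlMr // ler_piMr // ltW.
have hc := ceil_ge (log2 (1 / eps)).
lra.
Qed.
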